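(* Let $g=\{g_n\}_{n=1}^\infty$ be a sequence of positive numbers such that $(-\Delta_0 g)_n:=2g_n-g_{n-1}-g_{n+1}\ge0$ for all $n\in\mathbb{N}$ (with $g_0:=0$), and set $w_n:=(-\Delta_0g)_n/g_n$. Then for every finitely supported sequence $u=\{u_n\}_{n=0}^\infty$ with $u_0=0$, \[ \sum_{n=1}^\infty|u_n-u_{n-1}|^2=\sum_{n=1}^\infty w_n|u_n|^2+\sum_{n=2}^\infty\Big|\sqrt{\tfrac{g_{n-1}}{g_n}}\,u_n-\sqrt{\tfrac{g_n}{g_{n-1}}}\,u_{n-1}\Big|^2. \] In particular $\sum_{n=1}^\infty w_n|u_n|^2\le\sum_{n=1}^\infty|u_n-u_{n-1}|^2$ for all such $u$. Moreover, if there exist finitely supported sequences $\xi^N=\{\xi^N_n\}_{n=1}^\infty$, $N\in\mathbb{N}$, with $\xi^N\le\xi^{N+1}$ pointwise, $\xi^N_n\to1$ as $N\to\infty$ for every $n$, and \[ \lim_{N\to\infty}\sum_{n=2}^\infty g_ng_{n-1}|\xi^N_n-\xi^N_{n-1}|^2=0, \] then $w$ is an optimal Hardy weight.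
   Context: $\mathbb{N}=\{1,2,\dots\}$. A Hardy weight (for the discrete Dirichlet Laplacian) is a sequence $\tilde w=\{\tilde w_n\}_{n\ge1}$ with $\tilde w_n\ge0$ such that $\sum_{n\ge1}\tilde w_n|u_n|^2\le\sum_{n\ge1}|u_n-u_{n-1}|^2$ for all finitely supported $\{u_n\}_{n\ge0}$ with $u_0=0$. A Hardy weight $w$ is optimal if for every Hardy weight $\tilde w$ with $\tilde w_n\ge w_n$ for all $n$, one has $\tilde w=w$. *)

(* Defs.v *)
From HB Require Import structures.
From mathcomp Require Import all_boot all_order all_algebra.
From mathcomp Require Import all_classical all_reals all_analysis.
Set Implicit Arguments. Unset Strict Implicit. Unset Printing Implicit Defensive.
Import Order.TTheory GRing.Theory Num.Theory.
Import numFieldNormedType.Exports.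
Local Open Scope ring_scope.

Definition supp_below {R : realType} (u : nat -> R) (M : nat) : Prop :=
  forall n : nat, (M <= n)%N -> u n = 0.

(* Hardy weight for the discrete Dirichlet Laplacian (indices n >= 1 matter).
   For u with u 0 = 0 and support in [0,M), all nonzero terms of the infinite
   sums lie in the range 1 <= n < M.+1. *)
Definition hardy_weight {R : realType} (w : nat -> R) : Prop :=
  (forall n : nat, (1 <= n)%N -> 0 <= w n) /\
  forall (u : nat -> R) (M : nat), u 0%N = 0 -> supp_below u M ->
    \sum_(1 <= n < M.+1) w n * u n ^+ 2 <=
    \sum_(1 <= n < M.+1) (u n - u n.-1) ^+ 2.

Definition optimal_hardy_weight {R : realType} (w : nat -> R) : Prop :=
  hardy_weight w /\
  forall w' : nat -> R, hardy_weight w' ->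
    (forall n : nat, (1 <= n)%N -> w n <= w' n) ->
    forall n : nat, (1 <= n)%N -> w' n = w n.

Definition mDelta0 {R : realType} (g : nat -> R) (n : nat) : R :=
  2 * g n - g n.-1 - g n.+1.
Definition hweight {R : realType} (g : nat -> R) (n : nat) : R :=
  mDelta0 g n / g n.

(* Main.v *)
Require Import Defs.
From HB Require Import structures.
From mathcomp Require Import all_boot all_order all_algebra.
From mathcomp Require Import all_classical all_reals all_analysis.
From mathcomp Require Import ring lra.
Import Order.TTheory GRing.Theory Num.Theory.
Import numFieldNormedType.Exports.
Local Open Scope classical_set_scope.
Local Open Scope ring_scope.

Lemma key (R : realType) (a b c x y : R) : 0 < a -> 0 < b ->
  (y - x) ^+ 2 = (2 * b - a - c) / b * y ^+ 2
   + (Num.sqrt (a / b) * y - Num.sqrt (b / a) * x) ^+ 2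
   + (x ^+ 2 * (1 - b / a) - y ^+ 2 * (1 - c / b)).
Proof.
move=> a0 b0.
have hab : 0 <= a / b by rewrite divr_ge0 // ltW.
have hba : 0 <= b / a by rewrite divr_ge0 // ltW.
have E : forall p q : R, (p * y - q * x) ^+ 2 = p ^+ 2 * y ^+ 2 - 2 * (p * q) * x * y + q ^+ 2 * x ^+ 2.
  by move=> p q; ring.
rewrite E sqr_sqrtr // sqr_sqrtr // -sqrtrM //.
have -> : a / b * (b / a) = 1 by field; apply/andP; split; rewrite gt_eqF.
rewrite sqrtr1.
have ? : a != 0 by rewrite gt_eqF.
have ? : b != 0 by rewrite gt_eqF.
field; apply/andP; split => //.
Qed.

Lemma key0 (R : realType) (b c y : R) : 0 < b ->
  (y - 0) ^+ 2 = (2 * b - 0 - c) / b * y ^+ 2 + (0 - y ^+ 2 * (1 - c / b)).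
Proof. move=> b0; have ? : b != 0 by rewrite gt_eqF. by field. Qed.

Lemma key2 (R : realType) (a b x y : R) : 0 < b -> 0 < a ->
  (Num.sqrt (a / b) * (x * b) - Num.sqrt (b / a) * (y * a)) ^+ 2 = b * a * (x - y) ^+ 2.
Proof.
move=> b0 a0.
have hab : 0 <= a / b by rewrite divr_ge0 // ltW.
have hba : 0 <= b / a by rewrite divr_ge0 // ltW.
have E : forall p q : R, (p * (x * b) - q * (y * a)) ^+ 2
   = p ^+ 2 * x ^+ 2 * b ^+ 2 - 2 * (p * q) * x * y * a * b + q ^+ 2 * y ^+ 2 * a ^+ 2.
  by move=> p q; ring.
rewrite E sqr_sqrtr // sqr_sqrtr // -sqrtrM //.
have ? : a != 0 by rewrite gt_eqF.
have ? : b != 0 by rewrite gt_eqF.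
have -> : a / b * (b / a) = 1 by field; apply/andP; split.
rewrite sqrtr1.
field; apply/andP; split => //.
Qed.

Theorem theorem4p3 (R : realType) (g : nat -> R)
  (g0 : g 0%N = 0)
  (gpos : forall n : nat, (1 <= n)%N -> 0 < g n)
  (superharm : forall n : nat, (1 <= n)%N -> 0 <= mDelta0 g n) :
  (forall (u : nat -> R) (M : nat), u 0%N = 0 -> supp_below u M ->
     \sum_(1 <= n < M.+1) (u n - u n.-1) ^+ 2 =
     \sum_(1 <= n < M.+1) hweight g n * u n ^+ 2 +
     \sum_(2 <= n < M.+1)
        (Num.sqrt (g n.-1 / g n) * u n - Num.sqrt (g n / g n.-1) * u n.-1) ^+ 2)
  /\ hardy_weight (hweight g)
  /\ ((exists (xi : nat -> nat -> R) (B : nat -> nat),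
         (forall N : nat, supp_below (xi N) (B N)) /\
         (forall (N n : nat), (1 <= n)%N -> xi N n <= xi N.+1 n) /\
         (forall n : nat, (1 <= n)%N -> (fun N => xi N n) @ \oo --> (1 : R)) /\
         (fun N => \sum_(2 <= n < (B N).+1)
                     g n * g n.-1 * (xi N n - xi N n.-1) ^+ 2) @ \oo --> (0 : R))
      -> optimal_hardy_weight (hweight g)).
Proof.
set T := fun (u : nat -> R) n =>
  (Num.sqrt (g n.-1 / g n) * u n - Num.sqrt (g n / g n.-1) * u n.-1) ^+ 2.
have ident : forall (u : nat -> R) (K : nat), u 0%N = 0 ->
     \sum_(1 <= n < K.+1) (u n - u n.-1) ^+ 2 =
     \sum_(1 <= n < K.+1) hweight g n * u n ^+ 2 + \sum_(2 <= n < K.+1) T u n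
     - u K ^+ 2 * (1 - g K.+1 / g K).
  move=> u K u0; elim: K => [|K IH].
    by rewrite !big_geq // u0; ring.
  rewrite big_nat_recr //= [X in _ = X + _ - _]big_nat_recr //= IH.
  case: K IH => [|K] IH.
    rewrite big_geq // big_geq // u0 (@key0 R (g 1%N) (g 2%N) (u 1%N) (gpos 1%N isT)) /hweight /mDelta0 /= g0; ring.
  rewrite [X in _ = _ + X - _]big_nat_recr //=.
  rewrite (@key R (g K.+1) (g K.+2) (g K.+3) (u K.+1) (u K.+2) (gpos K.+1 isT) (gpos K.+2 isT)) /hweight /mDelta0 /T /=.
  ring.
have part1 : forall (u : nat -> R) (M : nat), u 0%N = 0 -> supp_below u M ->
     \sum_(1 <= n < M.+1) (u n - u n.-1) ^+ 2 =
     \sum_(1 <= n < M.+1) hweight g n * u n ^+ 2 + \sum_(2 <= n < M.+1) T u n.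
  move=> u M u0 su; rewrite ident // su // expr0n /= mul0r subr0 //.
have wpos : forall n, (1 <= n)%N -> 0 <= hweight g n.
  by move=> n n1; rewrite /hweight divr_ge0 ?superharm // ltW // gpos.
have Tpos : forall u M, 0 <= \sum_(2 <= n < M.+1) T u n.
  by move=> u M; apply: sumr_ge0 => k _; rewrite /T sqr_ge0.
have hw : hardy_weight (hweight g).
  split => // u M u0 su; rewrite part1 // lerDl; exact: Tpos.
split; first exact: part1.
split => //.
move=> [xi [B [sup [_ [conv lim0]]]]].
split => // w' [w'pos w'H] wle n n1.
apply/eqP; rewrite eq_le wle // andbT.
set S := fun N => \sum_(2 <= k < (B N).+1) g k * g k.-1 * (xi N k - xi N k.-1) ^+ 2.
set c := (w' n - hweight g n) * g n ^+ 2.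
have Sge0 : forall N, 0 <= S N.
  move=> N; rewrite /S big_nat_cond; apply: sumr_ge0 => k /andP[/andP[k2 _] _].
  rewrite mulr_ge0 ?sqr_ge0 // mulr_ge0 // ltW // gpos //; case: k k2 => // [[]] //.
have bound : forall N, c * (xi N n * xi N n) <= S N.
  move=> N.
  case: (ltnP n (B N).+1) => nB; last first.
    by rewrite sup ?mul0r ?mulr0 // ltnW.
  set u := fun k => xi N k * g k.
  have u0 : u 0%N = 0 by rewrite /u g0 mulr0.
  have su : supp_below u (B N) by move=> k kB; rewrite /u sup // mul0r.
  have H := w'H u (B N) u0 su.
  rewrite part1 // -lerBlDl -sumrB in H.
  have -> : S N = \sum_(2 <= k < (B N).+1) T u k.
    apply: eq_big_nat => k /andP[k2 _].
    rewrite /T /u; apply/esym/key2; apply: gpos => //; case: k k2 => // [[]] //.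
  apply: le_trans H.
  rewrite (big_cat_nat n1 (ltnW nB)) /= [X in _ + X]big_ltn //=.
  have nn : forall a b, 0 <= a -> 0 <= b -> c * (xi N n * xi N n) <= a + (c * (xi N n * xi N n) + b).
    by move=> a b a0 b0; lra.
  have -> : w' n * u n ^+ 2 - hweight g n * u n ^+ 2 = c * (xi N n * xi N n).
    by rewrite /c /u; ring.
  apply: nn; rewrite big_nat_cond; apply: sumr_ge0 => k /andP[/andP[k1 _] _];
    rewrite -mulrBl mulr_ge0 ?sqr_ge0 ?subr_ge0 ?wle //.
  exact: leq_trans n1 (ltnW k1).
have : c * (1 * 1) <= 0.
  apply: (@ler_cvg_to _ _ _ _ (fun N => c * (xi N n * xi N n)) S _ _ _ lim0).
    2: by apply: nearW => N; apply: bound.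
  apply: cvgM; first exact: cvg_cst.
  by apply: cvgM; apply: conv.
rewrite !mulr1 /c => Hc.
have g2 : 0 < g n ^+ 2 by rewrite exprn_gt0 ?gpos.
have Hc2 : (w' n - hweight g n) * g n ^+ 2 <= 0 := Hc.
by move: Hc2; rewrite (pmulr_lle0 _ g2) subr_le0.
Qed.
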